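(* Let ${\cal G}$ be a closed graph, $1\le\nu\le\infty$, and let $f\in C^1_{\rm Dir}({\cal G})$ be split. Then $$\|\nabla f\|_1\ge \widetilde I_\nu({\cal G})\,\|f\|_{\nu'}.$$
   Context: A graph ${\cal G}$ consists of an undirected graph $(V,E)$ (multiple edges and self-loops allowed), edge lengths $\ell_e>0$, boundary vertices $\partial{\cal G}\subseteq V$, a vertex measure ${\cal V}$ (supported on $V$, ${\cal V}(v)>0$) and an edge measure ${\cal E}$ (zero on vertices, $a_e>0$ times Lebesgue measure on the interior of edge $e$); ${\cal G}$ is identified with its geometric realization (closed interval of length $\ell_e$ joining the endpoints of each $e$). Closed graph: finitely many vertices and edges and $\partial{\cal G}=\emptyset$. $C^1_{\rm Dir}({\cal G})$: continuous functions, uniformly continuously differentiable on each open edge, vanishing on $\partial{\cal G}$ (here all functions are of finite type since ${\cal G}$ is finite). $\|f\|_q$ is the $L^q({\cal V})$ norm, $\|\nabla f\|_1=\int|\nabla f|\,d{\cal E}$, $\nu'$ the dual exponent. $f$ is split if ${\cal V}(\{f>0\})\le {\cal V}({\cal G})/2$ and ${\cal V}(\{f<0\})\le{\cal V}({\cal G})/2$. For open $\Omega$ with finite boundary, ${\cal A}(\partial\Omega)=\sum_{x\in\partial\Omega\setminus V}a_{e(x)}+\sum_{v\in\partial\Omega\cap V}\sum_{e:\,v\in\overline{\Omega\cap e^\circ}}a_e$ ($e(x)$ the edge containing $x$, $e^\circ$ the open interior of $e$). $\Omega$ is admissible if open, with finite boundary, disjoint from $\partial{\cal G}$. $\widetilde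 I_\nu({\cal G})=\inf_{\Omega\text{ admissible}}{\cal A}(\partial\Omega)\min({\cal V}(\Omega),{\cal V}(\complement\Omega))^{(1/\nu)-1}$. *)

(* Defs.v *)
From HB Require Import structures.
From mathcomp Require Import all_boot all_order all_algebra.
From mathcomp Require Import all_classical all_reals all_analysis.
Set Implicit Arguments. Unset Strict Implicit. Unset Printing Implicit Defensive.
Import Order.TTheory GRing.Theory Num.Theory.
Import numFieldNormedType.Exports.
Local Open Scope classical_set_scope.
Local Open Scope ring_scope.

(* A closed graph: finitely many vertices and edges, no boundary vertices.
   Each (undirected) edge e is realised as the closed interval [0, glen e]
   glued at 0 to gsrc e and at glen e to gdst e (the orientation is an
   arbitrary choice; gsrc e = gdst e is a self-loop; multiple edges allowed).
   Edge measure: ga e times Lebesgue measure on the interior of e.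
   Vertex measure: gmu v > 0 at each vertex. *)
Record closed_graph (R : realType) := ClosedGraph {
  gV : finType;
  gE : finType;
  gsrc : gE -> gV;
  gdst : gE -> gV;
  glen : gE -> R;
  ga : gE -> R;
  gmu : gV -> R;
  glen_gt0 : forall e, 0 < glen e;
  ga_gt0 : forall e, 0 < ga e;
  gmu_gt0 : forall v, 0 < gmu v }.

Section GeometricRealization.
Variables (R : realType) (G : closed_graph R).

(* points: a vertex, or (e, t) = the point at parameter t of edge e;
   only 0 < t < glen e are genuine (interior) points. *)
Definition gpt := (gV G + (gE G * R))%type.

Definition greal : set gpt := fun x =>
  match x with inl _ => True | inr (e, t) => 0 < t < glen e end.

Definition gedge (e : gE G) : set gpt := fun x =>
  match x with inl _ => False | inr (e', t) => e' = e /\ 0 < t < glen e end.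

(* basic neighbourhoods: for small r these are exactly the metric balls
   of radius r in the geometric realization *)
Definition gball (x : gpt) (r : R) : set gpt :=
  match x with
  | inl v => fun y => match y with
      | inl w => w = v
      | inr (e, s) => 0 < s < glen e /\
          ((gsrc e = v /\ s < r) \/ (gdst e = v /\ glen e - s < r))
      end
  | inr (e, t) => fun y => match y with
      | inl _ => False
      | inr (e', s) => e' = e /\ 0 < s < glen e /\ `|s - t| < r
      end
  end.

Definition ginterior (A : set gpt) : set gpt :=
  fun x => A x /\ exists r, 0 < r /\ gball x r `<=` A.

Definition gclosure (A : set gpt) : set gpt :=
  fun x => greal x /\ forall r, 0 < r -> gball x r `&` A !=set0.

Definition gopen (A : set gpt) : Prop := A `<=` greal /\ A `<=` ginterior A.

Definition gbdry (A : set gpt) : set gpt := gclosure A `\` ginterior A.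

(* admissible: open, finite boundary (disjointness from the empty
   boundary of a closed graph is automatic) *)
Definition gadmissible (A : set gpt) : Prop := gopen A /\ finite_set (gbdry A).

Definition gpt_weight (x : gpt) : R :=
  match x with inl _ => 0 | inr (e, _) => ga e end.

Definition is_edge_pt (x : gpt) : Prop :=
  match x with inl _ => False | inr _ => True end.

Definition gA (Om : set gpt) : R :=
  (\sum_(x \in gbdry Om `&` is_edge_pt) gpt_weight x) +
  \sum_(v | `[< gbdry Om (inl v) >])
     \sum_(e | `[< gclosure (Om `&` gedge e) (inl v) >]) ga e.

Definition gvol (A : set gpt) : R := \sum_(v | `[< A (inl v) >]) gmu v.

(* exponent 1/nu - 1, with 1/oo = 0 *)
Definition iso_expo (nu : \bar R) : R :=
  match nu with EFin r => r^-1 - 1 | _ => -1 end.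

Definition Itilde (nu : \bar R) : \bar R :=
  ereal_inf [set z | exists Om : set gpt, [/\ gadmissible Om,
      0 < Num.min (gvol Om) (gvol (greal `\` Om)) &
      z = (gA Om * (Num.min (gvol Om) (gvol (greal `\` Om))) `^ iso_expo nu)%:E]].

Definition gedgefun (f : gpt -> R) (e : gE G) : R -> R := fun t => f (inr (e, t)).

Definition gcontinuous (f : gpt -> R) : Prop :=
  forall x, greal x -> forall eps, 0 < eps ->
    exists r, 0 < r /\ forall y, gball x r y -> `|f y - f x| < eps.

(* C^1_Dir for a closed graph (empty boundary, finitely many edges) *)
Definition C1Dir (f : gpt -> R) : Prop :=
  gcontinuous f /\
  forall e : gE G,
    (forall t, 0 < t < glen e -> derivable (gedgefun f e) t 1) /\
    (forall eps, 0 < eps -> exists d, 0 < d /\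
       forall s t, 0 < s < glen e -> 0 < t < glen e -> `|s - t| < d ->
         `|derive1 (gedgefun f e) s - derive1 (gedgefun f e) t| < eps).

Definition edge_open_itv (e : gE G) : set R := `]0, glen e[%classic.

Definition gradnorm1 (f : gpt -> R) : \bar R :=
  (\sum_(e : gE G) (ga e)%:E *
     \int[lebesgue_measure]_(t in edge_open_itv e)
        (`|derive1 (gedgefun f e) t|)%:E)%E.

Definition gLnorm (q : \bar R) (f : gpt -> R) : R :=
  match q with
  | EFin r => (\sum_(v : gV G) gmu v * `|f (inl v)| `^ r) `^ r^-1
  | _ => \big[Num.max/0]_(v : gV G) `|f (inl v)|
  end.

Definition dual_exp (nu : \bar R) : \bar R :=
  match nu with
  | EFin r => if r == 1 then +oo%E else (r / (r - 1))%:E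
  | +oo%E => 1%:E
  | -oo%E => -oo%E
  end.

Definition gsplit (f : gpt -> R) : Prop :=
  gvol [set x | greal x /\ 0 < f x] <= gvol greal / 2 /\
  gvol [set x | greal x /\ f x < 0] <= gvol greal / 2.

End GeometricRealization.

(* Main.v *)
Require Import Defs.
From HB Require Import structures.
From mathcomp Require Import all_boot all_order all_algebra.
From mathcomp Require Import all_classical all_reals all_analysis.
From mathcomp Require Import ring lra measurable_realfun.
Import Order.TTheory GRing.Theory Num.Theory.
Import numFieldNormedType.Exports.
Local Open Scope classical_set_scope.
Local Open Scope ring_scope.
Section Edge.
Variable R : realType.
Local Open Scope ring_scope.

Lemma edge_bound (g : R -> R) (l fu fw : R) :
  0 < l ->
  (forall t, 0 < t < l -> derivable g t 1) ->
  (forall eps, 0 < eps -> exists d, 0 < d /\ forall s t, 0 < s < l -> 0 < t < l ->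
      `|s - t| < d -> `|derive1 g s - derive1 g t| < eps) ->
  (forall eps, 0 < eps -> exists r, 0 < r /\ forall s, 0 < s < l -> s < r -> `|g s - fu| < eps) ->
  (forall eps, 0 < eps -> exists r, 0 < r /\ forall s, 0 < s < l -> l - s < r -> `|g s - fw| < eps) ->
  (`|fu - fw|%:E <= \int[lebesgue_measure]_(t in `]0%R, l[) (`|derive1 g t|)%:E)%E.
Proof.
move=> l0 der UC Hu Hw.
have cg' : forall x, 0 < x < l -> {for x, continuous (derive1 g)}.
  move=> x /andP[x0 xl]; apply/cvgrPdist_lt => eps eps0.
  have [d [d0 Hd]] := UC eps eps0.
  apply/nbhs_ballP; exists (Num.min d (Num.min x (l - x))) => /=.
    by rewrite !lt_min d0 x0 subr_gt0 xl.
  move=> t; rewrite /ball /= !lt_min => /and3P[h1 h2 h3].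
  apply: Hd => //; first by rewrite x0 xl.
  move: h2 h3; rewrite !ltr_distlC => /andP[? ?] /andP[? ?].
  apply/andP; split; lra.
have mD : measurable (`]0, l[ : set R) by [].
have mf : measurable_fun `]0, l[ (derive1 g).
  apply: open_continuous_measurable_fun; first exact: interval_open.
  by move=> x; rewrite inE /= in_itv /= => /cg'.
have FTC : forall a b, 0 < a -> a < b -> b < l ->
    (`|g b - g a|%:E <= \int[lebesgue_measure]_(t in `]0%R, l[) (`|derive1 g t|)%:E)%E.
  move=> a b a0 ab bl.
  have sub : (`[a, b] : set R) `<=` `]0, l[.
    move=> x; rewrite /= !in_itv /= => /andP[? ?]; apply/andP; split; lra.
  have cont : {within `[a, b], continuous (derive1 g)}.
    apply: continuous_in_subspaceT => x; rewrite inE => /sub.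
    by rewrite /= in_itv /= => /cg'.
  have dF : derivable_oo_LRcontinuous g a b.
    split.
      move=> x; rewrite in_itv /= => /andP[? ?]; apply: der; apply/andP; split; lra.
      apply: cvg_at_right_filter; apply: differentiable_continuous.
      rewrite -derivable1_diffP; apply: der; apply/andP; split; lra.
    apply: cvg_at_left_filter; apply: differentiable_continuous.
    rewrite -derivable1_diffP; apply: der; apply/andP; split; lra.
  have H := @continuous_FTC2 R (derive1 g) g a b ab cont dF (fun _ _ => erefl).
  have -> : (`|g b - g a|%:E = `|(g b)%:E - (g a)%:E|)%E by [].
  rewrite -H.
  apply: (le_trans (le_abse_integral _ _ _)) => //.
    apply/measurable_EFinP; exact: (measurable_funS mD sub mf).
  apply: ge0_subset_integral => //.
  apply/measurable_EFinP; exact: measurableT_comp.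
apply/lee_addgt0Pr => eps eps0.
have e2 : 0 < eps / 2 by rewrite divr_gt0.
have [r1 [r10 H1]] := Hu _ e2.
have [r2 [r20 H2]] := Hw _ e2.
set a := Num.min (r1 / 2) (l / 3).
set b := l - Num.min (r2 / 2) (l / 3).
have a0 : 0 < a by rewrite lt_min divr_gt0 // divr_gt0.
have al : a <= l / 3 by rewrite ge_min lexx orbT.
have ar : a < r1 by rewrite /a gt_min; apply/orP; left; lra.
have m0 : 0 < Num.min (r2 / 2) (l / 3) by rewrite lt_min divr_gt0 // divr_gt0.
have ml : Num.min (r2 / 2) (l / 3) <= l / 3 by rewrite ge_min lexx orbT.
have mr : Num.min (r2 / 2) (l / 3) < r2 by rewrite gt_min; apply/orP; left; lra.
have ab : a < b by rewrite /b; lra.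
have bl : b < l by rewrite /b; lra.
have ha := H1 a ltac:(apply/andP; split; lra) ar.
have hb := H2 b ltac:(apply/andP; split; lra) ltac:(rewrite /b; lra).
apply: (le_trans _ (leeD2r _ (FTC a b a0 ab bl))).
rewrite -EFinD lee_fin.
have := ler_normD (g b - g a) (g a - fu).
have := ler_normD (g b - fw) (g b - g a + (g a - fu)).
rewrite distrC.
have -> : fu - fw = (g b - fw) - (g b - g a + (g a - fu)) by ring.
move=> h h'.
have := ler_normB (g b - fw) (g b - g a + (g a - fu)).
lra.
Qed.
End Edge.
Section Disc.
Local Close Scope classical_set_scope.
Variables (R : realType) (V E : finType) (src dst : E -> V) (a : E -> R) (mu : V -> R).
Hypotheses (a_ge0 : forall e, 0 <= a e) (mu_gt0 : forall v, 0 < mu v).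

Definition Nrm (q : \bar R) (h : V -> R) : R :=
  match q with
  | EFin r => (\sum_(v : V) mu v * `|h v| `^ r) `^ r^-1
  | _ => \big[Num.max/0]_(v : V) `|h v|
  end.

Definition qok (q : \bar R) : bool :=
  match q with EFin p => 1 <= p | +oo%E => true | -oo%E => false end.

Lemma mu_ge0 v : 0 <= mu v. Proof. exact: ltW. Qed.

Lemma Nrm_ge0 q h : 0 <= Nrm q h.
Proof.
case: q => [r| |] /=; first exact: powR_ge0.
- by apply: (big_ind (fun x => 0 <= x)) => // x y; rewrite le_max => ->.
- by apply: (big_ind (fun x => 0 <= x)) => // x y; rewrite le_max => ->.
Qed.

Lemma Nrm_eq q h1 h2 : (forall v, `|h1 v| = `|h2 v|) -> Nrm q h1 = Nrm q h2.
Proof.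
move=> H; case: q => [r| |] /=.
- by congr (_ `^ _); apply: eq_bigr => v _; rewrite H.
- by apply: eq_bigr => v _; rewrite H.
- by apply: eq_bigr => v _; rewrite H.
Qed.

Lemma bigmax_leR (c : R) (F : V -> R) : 0 <= c -> (forall v, F v <= c) ->
  \big[Num.max/0]_(v : V) F v <= c.
Proof.
move=> c0 H; apply: (big_ind (fun x => x <= c)) => // x y.
by rewrite ge_max => -> ->.
Qed.

Lemma le_bigmaxR (F : V -> R) w : F w <= \big[Num.max/0]_(v : V) F v.
Proof.
rewrite (bigD1 w) //= le_max lexx //.
Qed.

Lemma Nrm0 q h : qok q -> (forall v, h v = 0) -> Nrm q h = 0.
Proof.
move=> hq H; case: q hq => [r| |] //= r1.
- rewrite big1 ?powR0 //; first by rewrite invr_eq0; apply/eqP => r0; move: r1; rewrite r0; lra.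
  move=> v _; rewrite H normr0 powR0 ?mulr0 //; apply/eqP => r0; move: r1; rewrite r0; lra.
- apply/eqP; rewrite eq_le (Nrm_ge0 +oo%E h) andbT.
  by apply: bigmax_leR => // v; rewrite H normr0.
Qed.

Lemma Nrm_scale q m h : qok q -> 0 <= m ->
  Nrm q (fun v => m * h v) <= m * Nrm q h.
Proof.
move=> hq m0; case: q hq => [r| |] //= r1.
- have r0 : 0 < r by lra.
  rewrite (_ : \sum_v mu v * `|m * h v| `^ r = m `^ r * \sum_v mu v * `|h v| `^ r).
    rewrite powRM ?powR_ge0 ?sumr_ge0 // => [|v _]; last by rewrite mulr_ge0 ?mu_ge0 ?powR_ge0.
    by rewrite -powRrM mulfV ?gt_eqF // powRr1.
  rewrite mulr_sumr; apply: eq_bigr => v _.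
  by rewrite normrM (ger0_norm m0) powRM // mulrCA.
- apply: bigmax_leR; first by rewrite mulr_ge0 //; exact: (Nrm_ge0 +oo%E h).
  move=> v; rewrite normrM (ger0_norm m0) ler_wpM2l //.
  exact: le_bigmaxR.
Qed.

Lemma powR_conv (p l x y : R) : 1 <= p -> 0 <= l -> l <= 1 -> 0 <= x -> 0 <= y ->
  (l * x + (1 - l) * y) `^ p <= l * x `^ p + (1 - l) * y `^ p.
Proof.
move=> p1 l0 l1 x0 y0.
have := @convex_powR R p p1 (Itv01 l0 l1) x y.
rewrite !convRE /=; apply.
  by rewrite inE /= in_itv /= x0.
by rewrite inE /= in_itv /= y0.
Qed.

Lemma sum_eq0_pos (g : V -> R) p : 0 < p -> (forall v, 0 <= g v) ->
  \sum_v mu v * g v `^ p = 0 -> forall v, g v = 0.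
Proof.
move=> p0 g0 /eqP; rewrite psumr_eq0 => [/allP H v|v _]; last first.
  by rewrite mulr_ge0 ?mu_ge0 ?powR_ge0.
have := H v (mem_index_enum v); rewrite /= mulf_eq0 gt_eqF ?mu_gt0 //=.
by move/eqP/powR_eq0_eq0.
Qed.

Lemma mink_pos p (g h : V -> R) (A B : R) : 1 <= p -> 0 < A -> 0 < B ->
  (forall v, 0 <= g v) -> (forall v, 0 <= h v) ->
  \sum_v mu v * (g v / A) `^ p = 1 -> \sum_v mu v * (h v / B) `^ p = 1 ->
  \sum_v mu v * (g v + h v) `^ p <= (A + B) `^ p.
Proof.
move=> p1 Ap Bp g0 h0 Sx Sy.
have cp : 0 < A + B := addr_gt0 Ap Bp.
have lam0 : 0 <= A / (A + B) by rewrite divr_ge0 // ltW.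
have lam1 : A / (A + B) <= 1 by rewrite ler_pdivrMr // mul1r lerDl ltW.
apply: (@le_trans _ _ (\sum_v ((A + B) `^ p * (A / (A + B))) * (mu v * (g v / A) `^ p) +
   \sum_v ((A + B) `^ p * (1 - A / (A + B))) * (mu v * (h v / B) `^ p))); last first.
  by rewrite -!mulr_sumr Sx Sy !mulr1 le_eqVlt; apply/orP; left; apply/eqP; ring.
rewrite -big_split /=; apply: ler_sum => v _.
have -> : g v + h v = (A + B) * (A / (A + B) * (g v / A) + (1 - A / (A + B)) * (h v / B)).
  by field; rewrite ?gt_eqF.
have xg : 0 <= g v / A by rewrite divr_ge0 // ltW.
have yh : 0 <= h v / B by rewrite divr_ge0 // ltW.
have z0 : 0 <= A / (A + B) * (g v / A) + (1 - A / (A + B)) * (h v / B).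
  by rewrite addr_ge0 // mulr_ge0 // subr_ge0.
rewrite powRM //; last exact: ltW.
apply: (@le_trans _ _ (mu v * ((A + B) `^ p * (A / (A + B) * (g v / A) `^ p +
   (1 - A / (A + B)) * (h v / B) `^ p)))).
  rewrite ler_wpM2l ?mu_ge0 // ler_wpM2l ?powR_ge0 //.
  exact: powR_conv.
rewrite le_eqVlt; apply/orP; left; apply/eqP.
move: (A / (A + B)) ((A + B) `^ p) ((g v / A) `^ p) ((h v / B) `^ p) (mu v) => l C X Y m.
ring.
Qed.

Lemma Nrm_add q g h : qok q -> (forall v, 0 <= g v) -> (forall v, 0 <= h v) ->
  Nrm q (fun v => g v + h v) <= Nrm q g + Nrm q h.
Proof.
move=> hq g0 h0; case: q hq => [p| |] //= p1; last first.
  apply: bigmax_leR; first by rewrite addr_ge0 // (Nrm_ge0 +oo%E).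
  move=> v; apply: (le_trans (ler_normD _ _)); apply: lerD; exact: le_bigmaxR.
have p0 : 0 < p by lra.
have pi0 : p^-1 != 0 by rewrite invr_eq0 gt_eqF.
set A := (\sum_v mu v * `|g v| `^ p) `^ p^-1.
set B := (\sum_v mu v * `|h v| `^ p) `^ p^-1.
have A0 : 0 <= A by exact: powR_ge0.
have B0 : 0 <= B by exact: powR_ge0.
have Ae' : A `^ p = \sum_v mu v * `|g v| `^ p.
  rewrite /A -powRrM mulVf ?gt_eqF // powRr1 // sumr_ge0 // => v _.
  by rewrite mulr_ge0 ?mu_ge0 ?powR_ge0.
have Be' : B `^ p = \sum_v mu v * `|h v| `^ p.
  rewrite /B -powRrM mulVf ?gt_eqF // powRr1 // sumr_ge0 // => v _.
  by rewrite mulr_ge0 ?mu_ge0 ?powR_ge0.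
have LHSe : (\sum_v mu v * `|g v + h v| `^ p) = \sum_v mu v * (g v + h v) `^ p.
  by apply: eq_bigr => v _; rewrite ger0_norm // addr_ge0.
have ge : \sum_v mu v * `|g v| `^ p = \sum_v mu v * g v `^ p.
  by apply: eq_bigr => v _; rewrite ger0_norm.
have he : \sum_v mu v * `|h v| `^ p = \sum_v mu v * h v `^ p.
  by apply: eq_bigr => v _; rewrite ger0_norm.
rewrite LHSe; rewrite ge in Ae'; rewrite he in Be'.
clearbody A B.
have [Ae|An] := eqVneq A 0.
  have gz := @sum_eq0_pos g p p0 g0 ltac:(by rewrite -Ae' Ae powR0 // gt_eqF).
  rewrite Ae add0r -[B](@powRr1 _ B) // -[in X in _ <= X](mulfV (lt0r_neq0 p0)) powRrM Be'.
  rewrite le_eqVlt; apply/orP; left; apply/eqP; congr (_ `^ _).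
  by apply: eq_bigr => v _; rewrite gz add0r.
have [Be|Bn] := eqVneq B 0.
  have hz := @sum_eq0_pos h p p0 h0 ltac:(by rewrite -Be' Be powR0 // gt_eqF).
  rewrite Be addr0 -[A](@powRr1 _ A) // -[in X in _ <= X](mulfV (lt0r_neq0 p0)) powRrM Ae'.
  rewrite le_eqVlt; apply/orP; left; apply/eqP; congr (_ `^ _).
  by apply: eq_bigr => v _; rewrite hz addr0.
have Ap : 0 < A by rewrite lt_neqAle eq_sym An A0.
have Bp : 0 < B by rewrite lt_neqAle eq_sym Bn B0.
have Sx : \sum_v mu v * (g v / A) `^ p = 1.
  have -> : \sum_v mu v * (g v / A) `^ p = (\sum_v mu v * g v `^ p) * (A^-1) `^ p.
    rewrite mulr_suml; apply: eq_bigr => v _.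
    by rewrite powRM ?invr_ge0 // mulrA.
  by rewrite -Ae' -powRM ?invr_ge0 // mulfV ?gt_eqF // powR1.
have Sy : \sum_v mu v * (h v / B) `^ p = 1.
  have -> : \sum_v mu v * (h v / B) `^ p = (\sum_v mu v * h v `^ p) * (B^-1) `^ p.
    rewrite mulr_suml; apply: eq_bigr => v _.
    by rewrite powRM ?invr_ge0 // mulrA.
  by rewrite -Be' -powRM ?invr_ge0 // mulfV ?gt_eqF // powR1.
have key := @mink_pos p g h A B p1 Ap Bp g0 h0 Sx Sy.
apply: (@le_trans _ _ (((A + B) `^ p) `^ p^-1)).
  apply: ge0_ler_powR => //; first by rewrite invr_ge0 ltW.
    by rewrite nnegrE sumr_ge0 // => v _; rewrite mulr_ge0 ?mu_ge0 ?powR_ge0.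
  by rewrite nnegrE powR_ge0.
by rewrite -powRrM mulfV ?gt_eqF // powRr1 // addr_ge0.
Qed.

Definition vol (S : {set V}) := \sum_(v in S) mu v.
Definition Vt := \sum_v mu v.
Definition ind (S : {set V}) (v : V) : R := (v \in S)%:R.
Definition Cut (S : {set V}) := \sum_e a e * ((src e \in S) != (dst e \in S))%:R.
Definition Dg (g : V -> R) := \sum_e a e * `|g (src e) - g (dst e)|.

Lemma Dg_ge0 g : 0 <= Dg g.
Proof. by apply: sumr_ge0 => e _; rewrite mulr_ge0. Qed.

Lemma vol_sub (S T : {set V}) : S \subset T -> vol S <= vol T.
Proof.
move=> ST; rewrite /vol [X in X <= _]big_mkcond [X in _ <= X]big_mkcond /=.
apply: ler_sum => v _; case: (boolP (v \in S)) => vS.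
  by rewrite (fintype.subsetP ST v vS).
by case: (v \in T) => //; exact: mu_ge0.
Qed.

Lemma core q I : qok q -> 0 <= I ->
  (forall S : {set V}, S != finset.set0 -> vol S <= Vt / 2 -> I * Nrm q (ind S) <= Cut S) ->
  forall n (g : V -> R), (#|[set v | (0 < g v)%R]| <= n)%N -> (forall v, 0 <= g v) ->
  vol [set v | 0 < g v] <= Vt / 2 -> I * Nrm q g <= Dg g.
Proof.
move=> hq I0 HS.
have base : forall g : V -> R, (forall v, 0 <= g v) -> [set v | 0 < g v] = finset.set0 ->
    I * Nrm q g <= Dg g.
  move=> g g0 S0; rewrite Nrm0 ?mulr0 ?Dg_ge0 // => v.
  have : v \notin [set v | 0 < g v] by rewrite S0 finset.in_set0.
  by rewrite inE -leNgt => h; apply/le_anti; rewrite h g0.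
elim=> [|n IH] g hn g0 hv.
  by apply: base => //; apply/eqP; rewrite -cards_eq0 -leqn0.
set S := [set v | 0 < g v] in hn hv *.
case: (set_0Vmem S) => [S0|[v0 v0S]]; first exact: base.
have [vm vmS vmmin] : exists2 vm, vm \in S & forall v, v \in S -> g vm <= g v.
  by case: (arg_minP g v0S) => vm vmS vmmin; exists vm.
set m := g vm.
have m0 : 0 < m by move: vmS; rewrite inE.
have gout : forall v, v \notin S -> g v = 0.
  by move=> v; rewrite inE -leNgt => h; apply/le_anti; rewrite h g0.
pose g' := fun v => g v - m * ind S v.
have g'0 : forall v, 0 <= g' v.
  move=> v; rewrite /g' /ind; case: (boolP (v \in S)) => vS.
    by rewrite mulr1 subr_ge0; exact: vmmin.
  by rewrite mulr0 subr0 g0.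
have supp' : [set v | 0 < g' v] \subset S :\ vm.
  apply/fintype.subsetP => v; rewrite !inE /g' /ind !inE.
  case: (boolP (0 < g v)) => vS /=; last by rewrite mulr0 subr0 (negbTE vS).
  by rewrite mulr1 andbT; apply: contraTneq => ->; rewrite /m subrr ltxx.
have hn' : (#|[set v | (0 < g' v)%R]| <= n)%N.
  apply: (leq_trans (subset_leq_card supp')).
  by move: hn; rewrite (cardsD1 vm S) vmS.
have hv' : vol [set v | 0 < g' v] <= Vt / 2.
  apply: le_trans hv; apply: vol_sub; apply: (fintype.subset_trans supp').
  exact: subsetDl.
have IH' := IH g' hn' g'0 hv'.
have edge : forall u w, `|g u - g w| = m * ((u \in S) != (w \in S))%:R + `|g' u - g' w|.
  move=> u w; rewrite /g' /ind; case: (boolP (u \in S)) => uS; case: (boolP (w \in S)) => wS /=.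
  - by rewrite !mulr1 mulr0 add0r; congr `|_|; ring.
  - have hu := vmmin u uS.
    rewrite (gout w wS) !mulr1 !mulr0 !subr0 !ger0_norm ?subr_ge0 ?g0 //; lra.
  - have hw := vmmin w wS.
    rewrite (gout u uS) !mulr1 !mulr0 !subr0 !sub0r !normrN !ger0_norm ?subr_ge0 ?g0 //; lra.
  - by rewrite (gout u uS) (gout w wS) ?mulr0 ?subr0 ?normr0 ?addr0.
have eqD : Dg g = m * Cut S + Dg g'.
  rewrite /Dg /Cut mulr_sumr -big_split; apply: eq_bigr => e _ /=.
  by rewrite edge; ring.
have eqN : Nrm q g = Nrm q (fun v => m * ind S v + g' v).
  by apply: Nrm_eq => v; rewrite /g' addrC subrK.
have ind0 : forall v, 0 <= m * ind S v.
  by move=> v; apply: mulr_ge0; [exact: ltW | exact: ler0n].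
rewrite eqN eqD.
apply: (@le_trans _ _ (I * (m * Nrm q (ind S) + Nrm q g'))).
  rewrite ler_wpM2l //; apply: (le_trans (@Nrm_add q _ _ hq ind0 g'0)).
  by rewrite lerD2r; apply: Nrm_scale => //; exact: ltW.
rewrite mulrDr mulrCA; apply: lerD; last exact: IH'.
apply: ler_wpM2l; first exact: ltW.
apply: HS => //.
by apply/set0Pn; exists v0.
Qed.

Lemma pm_ineq (x y : R) :
  `|Num.max x 0 - Num.max y 0| + `|Num.max (- x) 0 - Num.max (- y) 0| <= `|x - y|.
Proof.
case: (boolP (0 <= x)) => hx; last rewrite -ltNge in hx;
  case: (boolP (0 <= y)) => hy; try rewrite -ltNge in hy.
- rewrite (max_l hx) (max_l hy) (@max_r _ _ (- x) 0) ?(@max_r _ _ (- y) 0); try lra.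
  by rewrite subrr normr0 addr0.
- rewrite (max_l hx) (@max_r _ _ y 0) ?(@max_r _ _ (- x) 0) ?(@max_l _ _ (- y) 0); try lra.
  rewrite (@ger0_norm _ (x - 0)) ?(@ler0_norm _ (0 - - y)) ?(@ger0_norm _ (x - y)); lra.
- rewrite (@max_r _ _ x 0) ?(max_l hy) ?(@max_l _ _ (- x) 0) ?(@max_r _ _ (- y) 0); try lra.
  rewrite (@ler0_norm _ (0 - y)) ?(@ger0_norm _ (- x - 0)) ?(@ler0_norm _ (x - y)); lra.
- rewrite (@max_r _ _ x 0) ?(@max_r _ _ y 0) ?(@max_l _ _ (- x) 0) ?(@max_l _ _ (- y) 0); try lra.
  rewrite subrr normr0 add0r -opprD normrN; lra.
Qed.

Lemma disc q I (f : V -> R) : qok q -> 0 <= I ->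
  (forall S : {set V}, S != finset.set0 -> vol S <= Vt / 2 -> I * Nrm q (ind S) <= Cut S) ->
  vol [set v | 0 < f v] <= Vt / 2 -> vol [set v | f v < 0] <= Vt / 2 ->
  I * Nrm q f <= Dg f.
Proof.
move=> hq I0 HS hp hm.
pose fp := fun v => Num.max (f v) 0.
pose fm := fun v => Num.max (- f v) 0.
have fp0 : forall v, 0 <= fp v by move=> v; rewrite le_max lexx orbT.
have fm0 : forall v, 0 <= fm v by move=> v; rewrite le_max lexx orbT.
have eN : Nrm q f = Nrm q (fun v => fp v + fm v).
  apply: Nrm_eq => v; rewrite /fp /fm; case: (boolP (0 <= f v)) => h; last rewrite -ltNge in h.
    by rewrite (max_l h) (@max_r _ _ (- f v) 0) ?addr0 // oppr_le0.
  rewrite (@max_r _ _ (f v) 0) ?(@max_l _ _ (- f v) 0) ?add0r ?normrN //; try lra.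
have sp : [set v | 0 < fp v] = [set v | 0 < f v].
  by apply/setP => v; rewrite !inE /fp lt_max ltxx orbF.
have sm : [set v | 0 < fm v] = [set v | f v < 0].
  by apply/setP => v; rewrite !inE /fm lt_max ltxx orbF oppr_gt0.
have cp := @core q I hq I0 HS _ fp (leqnn _) fp0 (ltac:(by rewrite sp)).
have cm := @core q I hq I0 HS _ fm (leqnn _) fm0 (ltac:(by rewrite sm)).
rewrite eN; apply: (@le_trans _ _ (I * (Nrm q fp + Nrm q fm))).
  by rewrite ler_wpM2l // Nrm_add.
apply: (@le_trans _ _ (Dg fp + Dg fm)); first by rewrite mulrDr lerD.
rewrite /Dg -big_split; apply: ler_sum => e _ /=.
by rewrite -mulrDr ler_wpM2l // pm_ineq.
Qed.

End Disc.

Section Graph.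
Variables (R : realType) (G : closed_graph R).
Local Notation V := (gV G).
Local Notation E := (gE G).
Local Notation MU := (@gmu R G).
Local Notation SRC := (@gsrc R G).
Local Notation DST := (@gdst R G).
Local Notation AA := (@ga R G).

Definition Om (S : {set V}) : set (gpt G) := fun x =>
  match x with
  | inl v => v \in S
  | inr (e, t) => (0 < t < glen e) /\ ((gsrc e \in S) || (gdst e \in S))
  end.

Lemma Om_ball S x : Om S x -> gball x 1 `<=` Om S.
Proof.
case: x => [v|[e t]] /= hx [w|[e' s]] //=.
- by move=> ->.
- by case=> hs [[hv _]|[hv _]]; split => //; rewrite hv hx ?orbT.
- by case=> He [hs _]; subst e'; split => //; case: hx.
Qed.

Lemma Om_open S : gopen (Om S).
Proof.
split; first by case=> [v|[e t]] //= [].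
move=> x hx; split => //; exists 1; split => //; exact: Om_ball.
Qed.

Lemma Om_cl_edge S e t : gclosure (Om S) (inr (e, t)) -> Om S (inr (e, t)).
Proof.
case=> /= ht /(_ 1 ltr01) [[w|[e' s]]] [hb hO] //=.
case: hb => He _; subst e'; split => //; by case: hO.
Qed.

Lemma Om_bdry_edge S e t : ~ gbdry (Om S) (inr (e, t)).
Proof.
move=> [hc hni]; apply: hni; split; first exact: Om_cl_edge.
exists 1; split => //; apply: Om_ball; exact: Om_cl_edge.
Qed.

Lemma Om_bdry_v S v : gbdry (Om S) (inl v) -> v \notin S.
Proof.
move=> [hc hni]; apply/negP => hv; apply: hni; split; first exact: hv.
exists 1; split => //; exact: Om_ball.
Qed.

Lemma Om_fin S : finite_set (gbdry (Om S)).
Proof.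
apply: (@sub_finite_set _ _ (inl @` setT)).
  by move=> [v|[e t]] hb; [exists v | case: (@Om_bdry_edge S e t hb)].
apply: finite_image; exact: finite_finset.
Qed.

Lemma Om_cl_v S v e : gclosure (Om S `&` gedge e) (inl v) ->
  ((gsrc e == v) || (gdst e == v)) && ((gsrc e \in S) || (gdst e \in S)).
Proof.
case=> _ /(_ 1 ltr01) [[w|[e' s]] [hb [hO hE]]]; first by case: hE.
case: hE => He _; subst e'.
case: hO => _ ->; rewrite andbT.
by case: hb => _ [[<- _]|[<- _]]; rewrite eqxx ?orbT.
Qed.

Lemma gA_le S : gA (Om S) <= Cut R V E SRC DST AA S.
Proof.
rewrite /gA.
have -> : gbdry (Om S) `&` @is_edge_pt R G = set0.
  apply/seteqP; split => [x [hb he]|x //].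
  case: x hb he => [v|[e t]] hb he; [by case: he | by case: (@Om_bdry_edge S e t hb)].
rewrite fsbig_set0 add0r.
pose b := fun v (e : E) => [&& v \notin S, (gsrc e == v) || (gdst e == v) &
                               (gsrc e \in S) || (gdst e \in S)].
have a0 : forall e : E, 0 <= ga e by move=> e; exact: ltW (ga_gt0 e).
apply: (@le_trans _ _ (\sum_v \sum_(e : E) ga e * (b v e)%:R)).
  rewrite big_mkcond /=; apply: ler_sum => v _.
  case: asboolP => hb; last by apply: sumr_ge0 => e _; rewrite mulr_ge0 ?ler0n.
  rewrite big_mkcond /=; apply: ler_sum => e _.
  case: asboolP => hc; last by rewrite mulr_ge0 ?ler0n.
  by rewrite /b (@Om_bdry_v S v hb) (@Om_cl_v S v e hc) /= mulr1.
rewrite exchange_big /=; apply: ler_sum => e _.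
rewrite -mulr_sumr; apply: ler_wpM2l => //.
case hs: (gsrc e \in S); case hd: (gdst e \in S) => /=.
- rewrite big1 // => v _; rewrite /b ?hs ?hd /= ?andbT.
  case: (boolP (v \in S)) => hv //=.
  case: (eqVneq (gsrc e) v) => [hsv|_]; first by move: hv; rewrite -hsv hs.
  case: (eqVneq (gdst e) v) => [hdv|_] //; by move: hv; rewrite -hdv hd.
- rewrite (bigD1 (gdst e)) //= big1 ?addr0 /b ?hs ?hd ?eqxx ?orbT //= => v hv.
  rewrite ?hs ?hd /= ?andbT [DST e == v]eq_sym (negbTE hv) ?orbF.
  case: (boolP (v \in S)) => hvs //=.
  case: (eqVneq (gsrc e) v) => [hsv|] //; by move: hvs; rewrite -hsv hs.
- rewrite (bigD1 (gsrc e)) //= big1 ?addr0 /b ?hs ?hd ?eqxx ?orbT //= => v hv.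
  rewrite ?hs ?hd ?orbT ?andbT [SRC e == v]eq_sym (negbTE hv) /=.
  case: (boolP (v \in S)) => hvs //=.
  case: (eqVneq (gdst e) v) => [hdv|] //; by move: hvs; rewrite -hdv hd.
- by rewrite big1 // => v _; rewrite /b ?hs ?hd /= ?andbF.
Qed.

End Graph.

Section Graph2.
Variables (R : realType) (G : closed_graph R).
Local Notation V := (gV G).
Local Notation E := (gE G).
Local Notation MU := (@gmu R G).
Local Notation SRC := (@gsrc R G).
Local Notation DST := (@gdst R G).
Local Notation AA := (@ga R G).
Local Notation OM := (@Om R G).
Local Notation VOL := (@vol R V MU).
Local Notation VT := (@Vt R V MU).
Local Notation NRM := (@Nrm R V MU).

Lemma gA_ge0 (Om0 : set (gpt G)) : 0 <= gA Om0.
Proof.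
rewrite /gA addr_ge0 //.
  by apply: fsumr_ge0 => -[v|[e t]] _ //=; exact: ltW (ga_gt0 e).
by apply: sumr_ge0 => v _; apply: sumr_ge0 => e _; exact: ltW (ga_gt0 e).
Qed.

Lemma Itilde_ge0 nu : (0 <= Itilde G nu)%E.
Proof.
apply: le_ereal_inf_tmp => z [Om0 [_ _ ->]].
by rewrite lee_fin mulr_ge0 // ?gA_ge0 ?powR_ge0.
Qed.

Lemma gvol_Om S : gvol (OM S) = VOL S.
Proof. by apply: eq_bigl => v; apply/asboolP/idP. Qed.

Lemma gvol_Omc S : gvol (@greal R G `\` OM S) = VT - VOL S.
Proof.
have -> : VT = VOL S + \sum_(v | v \notin S) MU v.
  by rewrite /Vt (bigID (fun v => v \in S)).
rewrite (addrC (VOL S)) addrK; apply: eq_bigl => v.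
by apply/asboolP/idP => [[_ /negP]|/negP h] //.
Qed.

Lemma gvol_T : gvol (@greal R G) = VT.
Proof. by apply: eq_bigl => v; rewrite asboolT. Qed.

Lemma gvol_pos (f : gpt G -> R) :
  gvol [set x | greal x /\ 0 < f x] = VOL [set v | 0 < f (inl v)]%SET.
Proof. by apply: eq_bigl => v; rewrite inE; apply/asboolP/idP => [[]|] //. Qed.

Lemma gvol_neg (f : gpt G -> R) :
  gvol [set x | greal x /\ f x < 0] = VOL [set v | f (inl v) < 0]%SET.
Proof. by apply: eq_bigl => v; rewrite inE; apply/asboolP/idP => [[]|] //. Qed.

Lemma vol_pos (S : {set V}) : S != finset.set0 -> 0 < VOL S.
Proof.
case/set0Pn => v0 hv0; apply: (lt_le_trans (gmu_gt0 v0)).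
rewrite /vol /= (bigD1 v0) //= lerDl sumr_ge0 // => v _; exact: ltW (gmu_gt0 v).
Qed.

Lemma Itilde_le nu (S : {set V}) : S != finset.set0 -> VOL S <= VT / 2 ->
  (Itilde G nu <= (gA (OM S) * (VOL S) `^ iso_expo nu)%:E)%E.
Proof.
move=> S0 hS; have Vp := vol_pos S S0.
apply: ereal_inf_lbound; exists (OM S); split.
- by split; [exact: Om_open | exact: Om_fin].
- by rewrite gvol_Om gvol_Omc lt_min Vp /=; lra.
- by rewrite gvol_Om gvol_Omc (@min_l _ _ (VOL S) (VT - VOL S)) //; lra.
Qed.

Lemma expo_ind nu (S : {set V}) : (1%:E <= nu)%E -> S != finset.set0 ->
  (VOL S) `^ (iso_expo nu) * NRM (dual_exp nu) (ind R V S) = 1.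
Proof.
move=> hnu S0; have Vp := vol_pos S S0.
have sumE : forall p, p != 0 -> \sum_v MU v * `|ind R V S v| `^ p = VOL S.
  move=> p p0; rewrite /vol /= [RHS]big_mkcond /=; apply: eq_bigr => v _; rewrite /ind.
  case: (v \in S) => /=; first by rewrite normr1 powR1 /= mulr1.
  by rewrite normr0 powR0 // mulr0.
case: nu hnu => [r| |] //; rewrite ?lee_fin => hr /=.
- case: eqP => [r1|r1].
    rewrite r1 invr1 subrr powRr0 mul1r /=.
    apply/eqP; rewrite eq_le; apply/andP; split.
      apply: bigmax_leR => // v; rewrite /ind; case: (v \in S) => /=.
        by rewrite normr1.
      by rewrite normr0.
    case/set0Pn: S0 => v0 hv0; apply: le_trans (le_bigmaxR _ _ _ v0).
    by rewrite /ind hv0 /= normr1.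
  have r1' : 1 < r by rewrite lt_neqAle hr andbT; apply/eqP => h; apply: r1; rewrite h.
  have r0 : r != 0 by rewrite gt_eqF //; lra.
  have rm0 : r - 1 != 0 by rewrite gt_eqF //; lra.
  have p0 : r / (r - 1) != 0 by rewrite mulf_neq0 // invr_eq0.
  rewrite /= sumE // -powRD; last by rewrite (gt_eqF Vp) implybT.
  rewrite (_ : r^-1 - 1 + (r / (r - 1))^-1 = 0) ?powRr0 //.
  by field; rewrite rm0 r0.
- rewrite /= sumE ?oner_neq0 // invr1 powRr1 ?ltW // powR_inv1 ?ltW //.
  by rewrite mulVf // gt_eqF.
Qed.

End Graph2.

Theorem mainTheorem5 (R : realType) (G : closed_graph R) (nu : \bar R)
  (f : gpt G -> R) :
  (1%:E <= nu)%E -> C1Dir f -> gsplit f ->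
  (Itilde G nu * (gLnorm (dual_exp nu) f)%:E <= gradnorm1 f)%E.
Proof.
move=> hnu [cont der] [hsp hsm].
have hq : qok R (dual_exp nu).
  case: nu hnu => [r| |] //; last by rewrite /= lexx.
  rewrite lee_fin => hr /=.
  case: eqP => // r1.
  have r1' : 1 < r by rewrite lt_neqAle hr andbT; apply/eqP => h; apply: r1; rewrite h.
  by rewrite /= ler_pdivlMr ?subr_gt0 //; lra.
have gL : gLnorm (dual_exp nu) f = Nrm R (gV G) (@gmu R G) (dual_exp nu) (fun v => f (inl v)).
  by case: (dual_exp nu).
have hp : vol R (gV G) (@gmu R G) [set v | 0 < f (inl v)]%SET <= Vt R (gV G) (@gmu R G) / 2.
  by rewrite -gvol_pos -gvol_T.
have hm : vol R (gV G) (@gmu R G) [set v | f (inl v) < 0]%SET <= Vt R (gV G) (@gmu R G) / 2.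
  by rewrite -gvol_neg -gvol_T.
have a0 : forall e : gE G, 0 <= ga e by move=> e; exact: ltW (ga_gt0 e).
have mu0 : forall v : gV G, 0 < gmu v by move=> v; exact: gmu_gt0.
have grad0 : (0 <= gradnorm1 f)%E.
  rewrite /gradnorm1; apply: sume_ge0 => e _; apply: mule_ge0.
    by rewrite lee_fin.
  by apply: integral_ge0 => t _; rewrite lee_fin.
have Dle : ((Dg R (gV G) (gE G) (@gsrc R G) (@gdst R G) (@ga R G) (fun v => f (inl v)))%:E <= gradnorm1 f)%E.
  rewrite /Dg -sumEFin /gradnorm1; apply: lee_sum => e _; rewrite EFinM.
  apply: lee_wpmul2l; first by rewrite lee_fin.
  apply: (@edge_bound R (gedgefun f e) (glen e) (f (inl (gsrc e))) (f (inl (gdst e)))).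
  - exact: glen_gt0.
  - by move=> t ht; exact: (der e).1 t ht.
  - exact: (der e).2.
  - move=> eps eps0; have [r [r0 hr]] := cont (inl (gsrc e)) Logic.I eps eps0.
    exists r; split => // s hs sr; apply: (hr (inr (e, s))).
    by split => //; left.
  - move=> eps eps0; have [r [r0 hr]] := cont (inl (gdst e)) Logic.I eps eps0.
    exists r; split => // s hs sr; apply: (hr (inr (e, s))).
    by split => //; right.
have I0 := @Itilde_ge0 R G nu.
case EI: (Itilde G nu) I0 => [I| |] // I0'.
- rewrite lee_fin in I0'.
  rewrite -EFinM; apply: le_trans Dle; rewrite lee_fin gL.
  apply: (@disc R (gV G) (gE G) (@gsrc R G) (@gdst R G) (@ga R G) (@gmu R G) a0 mu0
             (dual_exp nu) I _ hq I0' _ hp hm).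
  move=> S S0 hS.
  have := @Itilde_le R G nu _ S0 hS; rewrite EI lee_fin => hI.
  have hx := @expo_ind R G nu S hnu S0.
  have g0 := @gA_le R G S.
  apply: (@le_trans _ _ (gA (@Om R G S) * (vol R (gV G) (@gmu R G) S) `^ iso_expo nu *
                           Nrm R (gV G) (@gmu R G) (dual_exp nu) (ind R (gV G) S))).
    by apply: ler_wpM2r => //; exact: Nrm_ge0.
  by rewrite -mulrA hx mulr1.
- have fz : forall v, f (inl v) = 0.
    move=> v; apply/eqP; apply: contraT; rewrite neq_lt => /orP[hl|hg].
      have S0 : [set v | f (inl v) < 0]%SET != finset.set0.
        by apply/set0Pn; exists v; rewrite inE.
      by have := @Itilde_le R G nu _ S0 hm; rewrite EI.
    have S0 : [set v | 0 < f (inl v)]%SET != finset.set0.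
      by apply/set0Pn; exists v; rewrite inE.
    by have := @Itilde_le R G nu _ S0 hp; rewrite EI.
  by rewrite gL Nrm0 // mule0.
Qed.
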